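(* Let $S,T\subseteq\mathbb{Z}_{>0}$ be finite with $T\preceq S$, and let $S'\subseteq S$ with $S'\neq S$. Let $a=\min(S\setminus S')$ and $b=\min((T\triangleleft S)\setminus(T\triangleleft S'))$. Then $T\triangleleft(S\setminus\{a\})=(T\triangleleft S)\setminus\{b\}$.
   Context: For a finite set $S\subseteq\mathbb{Z}_{>0}$, $S(i)$ denotes its $i$th smallest element. $T\preceq S$ means $|T|\ge|S|$ and $T(i)<S(i)$ for all $i\in[|S|]$. For finite $S,T$, $T\triangleleft S$ is computed by going through $S$ from largest to smallest; each $s$ picks the largest element of $T$ less than $s$ not yet picked (if one exists); $T\triangleleft S$ is the set of picked elements. *)

(* Defs.v *)
From mathcomp Require Import all_boot all_order.
From mathcomp Require Import finmap.
Set Implicit Arguments. Unset Strict Implicit. Unset Printing Implicit Defensive.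
Local Open Scope fset_scope.

(* S(i): the i-th smallest element of S, 0-indexed (i < #|`S|). *)
Definition ith (S : {fset nat}) (i : nat) : nat := nth 0 (sort leq S) i.

Definition precs (T S : {fset nat}) : Prop :=
  #|`S| <= #|`T| /\ forall i, i < #|`S| -> ith T i < ith S i.

Definition pick_step (T : {fset nat}) (P : {fset nat}) (s : nat) : {fset nat} :=
  let C := [fset t in T | (t < s) && (t \notin P)] in
  if C == fset0 then P else (\max_(t <- C) t) |` P.

Definition tri (T S : {fset nat}) : {fset nat} :=
  foldl (pick_step T) fset0 (sort geq S).

(* Main.v *)
Require Import Defs.
From mathcomp Require Import all_boot all_order.
From mathcomp Require Import finmap.
From mathcomp Require Import zify.

Fixpoint Wup (T : {fset nat}) (X : nat -> bool) (n t : nat) : nat :=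
  if n is n'.+1 then (Wup T X n' t.+1 - (t.+1 \in T)) + X t.+1 else 0.

Definition Bnd (T : {fset nat}) (X : nat -> bool) N :=
  forall x, (x \in T -> x <= N) /\ (X x -> x <= N).

Lemma WupB T X N n t : Bnd T X N -> N <= t -> Wup T X n t = 0.
Proof.
move=> HB; elim: n t => [|n IH] t Ht //=.
rewrite IH; last lia.
have nT : (t.+1 \in T) = false.
  by apply/negbTE/negP => H; have := (HB _).1 H; lia.
have nX : X t.+1 = false.
  by apply/negbTE/negP => H; have := (HB _).2 H; lia.
by rewrite nT nX.
Qed.

Lemma Wup_ext T X N : Bnd T X N -> forall n k t, N <= t + n ->
  Wup T X (n + k) t = Wup T X n t.
Proof.
move=> HB; elim=> [|n IH] k t Ht.
  by rewrite add0n (@WupB _ _ _ _ _ HB) //; lia.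
by rewrite addSn /= IH //; lia.
Qed.

Lemma Wrec T X N t : Bnd T X N ->
  Wup T X N t = (Wup T X N t.+1 - (t.+1 \in T)) + X t.+1.
Proof.
move=> HB; case: N HB => [|n] HB.
  have nT : (t.+1 \in T) = false.
    by apply/negbTE/negP => H; have := (HB _).1 H; lia.
  have nX : X t.+1 = false.
    by apply/negbTE/negP => H; have := (HB _).2 H; lia.
  by rewrite nT nX.
have E : Wup T X n.+1 t.+1 = Wup T X n t.+1.
  by rewrite -addn1 (@Wup_ext _ _ _ HB) //; lia.
rewrite E; by [].
Qed.

Lemma down_ind N (P : nat -> Prop) : (forall t, N <= t -> P t) ->
  (forall t, t < N -> P t.+1 -> P t) -> forall t, P t.
Proof.
move=> H0 H1 t.
have: forall k t, N - t <= k -> P t.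
  elim=> [|k IH] t' h; first by apply H0; lia.
  case: (leqP N t') => h'; first by apply H0.
  by apply H1 => //; apply IH; lia.
by apply; exact: leqnn.
Qed.

Lemma Wup_mono T (X Y : nat -> bool) n t : (forall x, X x -> Y x) -> Wup T X n t <= Wup T Y n t.
Proof.
move=> sub; elim: n t => [|n IH] t //=.
apply: leq_add; first exact: leq_sub2r.
by case: (boolP (X t.+1)) => // /sub ->.
Qed.

Lemma Wup_eqX T (X Y : nat -> bool) n t : X =1 Y -> Wup T X n t = Wup T Y n t.
Proof. by move=> e; elim: n t => [|n IH] t //=; rewrite IH e. Qed.

Lemma Wup_nil T (X : nat -> bool) n t : (forall x, X x = false) -> Wup T X n t = 0.
Proof. by move=> e; elim: n t => [|n IH] t //=; rewrite IH e sub0n. Qed.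

Lemma Wins T (X Y : nat -> bool) N s : Bnd T X N -> Bnd T Y N -> ~~ X s ->
  (forall x, Y x = (x == s) || X x) ->
  (forall t, s <= t -> Wup T Y N t = Wup T X N t) /\
  (forall t, t < s ->
    (Wup T Y N t = (Wup T X N t).+1 /\
       forall v, t < v < s -> v \in T -> 0 < Wup T X N v) \/
    (Wup T Y N t = Wup T X N t /\
       exists v, [/\ t < v < s, v \in T & Wup T X N v = 0])).
Proof.
move=> BX BY nXs eY.
have P1 : forall t, s <= t -> Wup T Y N t = Wup T X N t.
  apply: (@down_ind N).
    by move=> t Ht _; rewrite (@WupB _ _ _ _ _ BX) // (@WupB _ _ _ _ _ BY).
  move=> t _ IH Hs; rewrite (@Wrec _ _ _ _ BX) (@Wrec _ _ _ _ BY) IH; last lia.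
  rewrite eY; have -> : (t.+1 == s) = false by apply/eqP; lia.
  by [].
split => //.
suff H : forall d t, t + d.+1 = s -> 
    (Wup T Y N t = (Wup T X N t).+1 /\
       forall v, t < v < s -> v \in T -> 0 < Wup T X N v) \/
    (Wup T Y N t = Wup T X N t /\
       exists v, [/\ t < v < s, v \in T & Wup T X N v = 0]).
  move=> t Ht; apply: (H (s - t.+1)); lia.
elim=> [|d IH] t Ht.
  left; split; last by move=> v; lia.
  rewrite (@Wrec _ _ _ t BX) (@Wrec _ _ _ t BY) P1; last lia.
  rewrite (eY t.+1); have -> : (t.+1 == s) = true by apply/eqP; lia.
  have -> : X t.+1 = false by apply/negbTE; rewrite addn1 in Ht; rewrite Ht.
  lia.
have IH' := IH t.+1 ltac:(lia); move: IH'.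
rewrite (@Wrec _ _ _ t BX) (@Wrec _ _ _ t BY) (eY t.+1).
have -> : (t.+1 == s) = false by apply/eqP; lia.
rewrite /=.
case=> [[E1 A1]|[E1 [v [Hv1 Hv2 Hv3]]]].
  case: (boolP (t.+1 \in T)) => HT.
    case: (posnP (Wup T X N t.+1)) => HW.
      right; split; first by rewrite E1 HW.
      by exists t.+1; split => //; lia.
    left; split; first by rewrite E1; lia.
    move=> v Hv Hv'; case: (v =P t.+1) => [->//|ne].
    apply: A1 => //; lia.
  left; split; first by rewrite E1; lia.
  move=> v Hv Hv'; case: (v =P t.+1) => [e|ne]; first by subst v; rewrite Hv' in HT.
  apply: A1 => //; lia.
right; split; first by rewrite E1.
by exists v; split => //; lia.
Qed.

Lemma count_split1 (A : seq nat) (a b : pred nat) x : uniq A ->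
  (forall y, a y = (y == x) || b y) -> ~~ b x -> count a A = (x \in A) + count b A.
Proof.
move=> uA H nb; rewrite -(count_uniq_mem x uA) -count_predUI.
rewrite (@eq_count _ (predI _ _) pred0) ?count_pred0 ?addn0; last first.
  by move=> y /=; case: (y =P x) => // ->; rewrite (negbTE nb).
by apply: eq_count => y /=; rewrite H.
Qed.

Definition cnt (A : seq nat) t v := count (fun x => (t < x) && (x <= v)) A.

Lemma cntS (A : seq nat) t v : uniq A -> t < v -> cnt A t v = (t.+1 \in A) + cnt A t.+1 v.
Proof. move=> uA h; apply: count_split1 => //= [y|]; lia. Qed.

Lemma Wdelta T (X Y : nat -> bool) N t u : Bnd T X N -> Bnd T Y N ->
  (forall x, X x -> Y x) -> (forall v, t < v <= u -> X v = Y v) -> t <= u ->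
  Wup T Y N t - Wup T X N t <= Wup T Y N u - Wup T X N u.
Proof.
move=> BX BY sub.
suff H : forall d t, t + d = u -> (forall v, t < v <= u -> X v = Y v) ->
  Wup T Y N t - Wup T X N t <= Wup T Y N u - Wup T X N u.
  by move=> Heq0 tu; apply: (H (u - t)) => //; lia.
elim=> [|d IH] {}t Ht Heq; first by rewrite addn0 in Ht; rewrite Ht.
have := IH t.+1 ltac:(lia) ltac:(move=> v hv; apply: Heq; lia).
rewrite (@Wrec _ _ _ t BX) (@Wrec _ _ _ t BY) Heq; last lia.
have := @Wup_mono T X Y N t.+1 sub.
case: (t.+1 \in T); case: (Y t.+1) => /=; lia.
Qed.

Lemma Wcount T (A : seq nat) N t v : uniq A -> Bnd T (fun x => x \in A) N -> t <= v ->
  (forall w, t < w <= v -> w \in T -> 0 < Wup T (fun x => x \in A) N w) ->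
  Wup T (fun x => x \in A) N t + cnt T t v = Wup T (fun x => x \in A) N v + cnt A t v.
Proof.
move=> uA BA.
suff H : forall d t, t + d = v -> 
  (forall w, t < w <= v -> w \in T -> 0 < Wup T (fun x => x \in A) N w) ->
  Wup T (fun x => x \in A) N t + cnt T t v = Wup T (fun x => x \in A) N v + cnt A t v.
  by move=> tv Hp; apply: (H (v - t)) => //; lia.
elim=> [|d IH] {}t Ht Hpos.
  rewrite addn0 in Ht; subst t.
  by rewrite /cnt !(@eq_count _ _ pred0) ?count_pred0 // => x /=; lia.
have := IH t.+1 ltac:(lia) ltac:(move=> w hw; apply: Hpos; lia).
rewrite (@Wrec _ _ _ t BA) (@cntS T t v (fset_uniq T)); last lia.
rewrite (@cntS A t v uA); last lia.
have := Hpos t.+1 ltac:(lia).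
case: (t.+1 \in T); case: (t.+1 \in A) => /=; lia.
Qed.

Lemma factA (l : seq nat) j u : sorted leq l -> j < count (fun x => x <= u) l ->
  nth 0 l j <= u.
Proof.
elim: l j => [|x l IH] j //= Hs Hc.
have Hl : sorted leq l by exact: path_sorted Hs.
have Hall := order_path_min leq_trans Hs.
case: j Hc => [|j] Hc /=.
  case: (leqP x u) => // hx.
  have : count (fun x => x <= u) l = 0.
    apply/eqP; rewrite -leqn0 leqNgt -has_count; apply/hasP => [[y yl hy]].
    by have := allP Hall y yl; rewrite /=; lia.
  have hf : (x <= u) = false by rewrite leqNgt hx.
  by move: Hc; rewrite hf /=; lia.
apply: IH => //; move: Hc; case: (x <= u) => /=; lia.
Qed.

Lemma factB (l : seq nat) j u : sorted leq l -> count (fun x => x < u) l <= j ->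
  j < size l -> u <= nth 0 l j.
Proof.
elim: l j => [|x l IH] j //= Hs Hc Hj.
have Hl : sorted leq l by exact: path_sorted Hs.
have Hall := order_path_min leq_trans Hs.
case: j Hc Hj => [|j] Hc Hj /=.
  by move: Hc; case: (ltnP x u) => //=.
rewrite /= in Hj Hc.
case: (ltnP x u) => hx.
  apply: IH => //; move: Hc; rewrite hx /=; lia.
have jl : j < size l by lia.
have := allP Hall _ (mem_nth 0 jl) => /= H.
exact: leq_trans hx H.
Qed.

Lemma precs_cnt (T S : {fset nat}) u : precs T S ->
  count (fun x => x <= u) S <= count (fun x => x < u) T.
Proof.
move=> [Hsz Hi].
set k := count _ _; set j := count _ _.
case: (leqP k j) => // H.
have kS : k <= size S by exact: count_size.
have HS := @factA (sort leq S) j u (sort_sorted leq_total S) ltac:(by rewrite count_sort).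
have jT : j < size (sort leq T).
  by rewrite size_sort; exact: (leq_trans H (leq_trans kS Hsz)).
have HT := @factB (sort leq T) j u (sort_sorted leq_total T) ltac:(by rewrite count_sort) jT.
have h := Hi j (leq_trans H kS); rewrite /ith in h.
by have := leq_trans (leq_trans h HS) HT; rewrite ltnn.
Qed.

Lemma W0 (T S : {fset nat}) N : (forall x, x \in S -> 0 < x) -> (forall x, x \in T -> 0 < x) ->
  precs T S -> Bnd T (fun x => x \in S) N -> Wup T (fun x => x \in S) N 0 = 0.
Proof.
move=> pS pT pr BS.
set W := Wup T (fun x => x \in S) N.
case: (posnP (W 0)) => // H0.
have ex : exists v, W v == 0 by exists N; rewrite /W (@WupB _ _ N).
case: (ex_minnP ex) => u /eqP Hu Hmin.
have u0 : 0 < u by case: u Hu Hmin => [|u'] Hu _ //; rewrite Hu in H0.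
have Hpos : forall w, w < u -> 0 < W w.
  move=> w wu; case: (posnP (W w)) => // /eqP e; have := Hmin _ e; lia.
have := @Wcount T S N 0 u.-1 (fset_uniq S) BS (leq0n _)
  ltac:(move=> w hw _; apply: Hpos; lia).
have E : W u.-1 = (u \in S).
  rewrite /W (@Wrec _ _ _ u.-1 BS) prednK // -/W Hu sub0n //.
rewrite -/W E.
have C1 : count (fun x => x <= u) S = (u \in S) + cnt S 0 u.-1.
  have e1 := @count_split1 S (fun x => (0 < x) && (x <= u)) (fun x => (0 < x) && (x <= u.-1)) u
    (fset_uniq S) ltac:(move=> y /=; lia) ltac:(apply/negP => /andP [_]; lia).
  rewrite /cnt -e1; apply: eq_in_count => x /pS /=; lia.
have C2 : count (fun x => x < u) T = cnt T 0 u.-1.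
  apply: eq_in_count => x /pT /=; lia.
have := @precs_cnt T S u pr.
rewrite C1 C2.
lia.
Qed.

Local Open Scope fset_scope.

Lemma max_mem (r : seq nat) : r != [::] -> \max_(t <- r) t \in r.
Proof.
elim: r => [|y r IH] // _; rewrite big_cons inE.
rewrite /maxn; case: ltnP => h; last by rewrite eqxx.
rewrite IH ?orbT //.
by case: r IH h => //; rewrite big_nil.
Qed.

Lemma Char (T : {fset nat}) (l : seq nat) N : uniq l -> (forall x, x \in T -> x <= N) ->
  (forall x, x \in l -> x <= N) ->
  foldl (pick_step T) fset0 l = [fset t in T | 0 < Wup T (fun x => x \in l) N t].
Proof.
elim/last_ind: l => [|l s IH] Hu HT Hl.
  by apply/fsetP => t; rewrite /= !inE Wup_nil // andbF.
rewrite rcons_uniq in Hu; case/andP: Hu => nsl ul.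
have Hl' : forall x, x \in l -> x <= N.
  by move=> x xl; apply: Hl; rewrite mem_rcons inE xl orbT.
rewrite -cats1 foldl_cat (IH ul HT Hl') /= cats1.
have BX : Bnd T (fun x => x \in l) N.
  by move=> x; split => [/HT|/Hl'].
have BY : Bnd T (fun x => x \in rcons l s) N by move=> x; split => [/HT|/Hl].
have [P1 P2] := @Wins T (fun x => x \in l) (fun x => x \in rcons l s) N s BX BY nsl
  ltac:(by move=> x /=; rewrite mem_rcons inE).
set WX := Wup T (fun x => x \in l) N in P1 P2 *.
set WY := Wup T (fun x => x \in rcons l s) N in P1 P2 *.
rewrite /pick_step.
set C := [fset t in T | _].
have inC : forall t, (t \in C) = [&& t \in T, t < s & WX t == 0].
  move=> t; rewrite /C !inE; case: (t \in T) => //=; case: (t < s) => //=.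
  by rewrite -leqNgt leqn0.
case: ifP => HC.
  apply/fsetP => t; rewrite !inE.
  case: (boolP (t \in T)) => Ht //=.
  case: (leqP s t) => Hst; first by rewrite P1.
  case: (P2 t Hst) => [[E A]|[E _]]; last by rewrite E.
  rewrite E /=; case: (posnP (WX t)) => // e.
  have : t \in C by rewrite inC Ht Hst e eqxx.
  by rewrite (eqP HC) inE.
have Cne : (C : seq nat) != [::].
  apply/eqP => e; move: HC; rewrite -[C == fset0]/(C == fset0) .
  case: (fset_0Vmem C) => [->|[x xC]]; first by rewrite eqxx.
  have : x \in (C : seq nat) by [].
  by rewrite e.
have mC := @max_mem C Cne.
set m := \max_(t <- C) t in mC *.
have mmax : forall v, v \in C -> v <= m.
  by move=> v vC; rewrite /m; apply: leq_bigmax_seq.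
have mC' : m \in C by [].
rewrite inC in mC'; case/and3P: mC' => mT ms /eqP Wm.
apply/fsetP => t; rewrite !inE.
case: (t =P m) => [->|ne] /=.
  rewrite mT /=.
  case: (P2 m ms) => [[E _]|[_ [v [Hv1 vT Wv]]]]; first by rewrite E.
  have : v <= m by apply: mmax; rewrite inC vT Wv eqxx /=; lia.
  lia.
case: (boolP (t \in T)) => Ht //=.
case: (leqP s t) => Hst; first by rewrite P1.
case: (P2 t Hst) => [[E A]|[E _]]; last by rewrite E.
rewrite E /=; case: (posnP (WX t)) => // e.
have tm : t <= m by apply: mmax; rewrite inC Ht Hst e eqxx.
have := A m ltac:(move/eqP: ne; lia) mT.
by rewrite Wm.
Qed.

Lemma tri_char (T S X : {fset nat}) N : (forall x, (x \in S) || (x \in T) -> x <= N) ->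
  X `<=` S -> tri T X = [fset t in T | 0 < Wup T (fun x => x \in X) N t].
Proof.
move=> HN /fsubsetP sub.
rewrite /tri (@Char T _ N) ?sort_uniq ?fset_uniq //.
- apply/fsetP => t; rewrite !inE.
  by rewrite (@Wup_eqX T _ (fun x => x \in X) N t) // => x; rewrite mem_sort.
- by move=> x xT; apply: HN; rewrite xT orbT.
- by move=> x; rewrite mem_sort => /sub xS; apply: HN; rewrite xS.
Qed.

Theorem lemma4p15 (S T S' : {fset nat}) (a b : nat) :
  (forall x, x \in S -> 0 < x) ->
  (forall x, x \in T -> 0 < x) ->
  precs T S ->
  S' `<=` S -> S' != S ->
  a \in S `\` S' -> (forall x, x \in S `\` S' -> a <= x) ->
  b \in tri T S `\` tri T S' -> (forall x, x \in tri T S `\` tri T S' -> b <= x) ->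
  tri T (S `\ a) = tri T S `\ b.
Proof.
move=> pS pT pr /fsubsetP sub _ aD amin bD bmin.
have [N HN] : exists N, forall x, (x \in S) || (x \in T) -> x <= N.
  exists (\max_(x <- (S : seq nat) ++ (T : seq nat)) x) => x h.
  by apply: leq_bigmax_seq => //; rewrite mem_cat.
have BS : Bnd T (fun x => x \in S) N.
  by move=> x; split => h; apply: HN; rewrite h ?orbT.
have BA : Bnd T (fun x => x \in S `\ a) N.
  move=> x; split => h; apply: HN; first by rewrite h orbT.
  by move: h; rewrite !inE => /andP [_ ->].
have BP : Bnd T (fun x => x \in S') N.
  by move=> x; split => h; apply: HN; rewrite ?h ?orbT // (sub _ h).
move: aD; rewrite !inE => /andP [naS' aS].
have a0 : 0 < a := pS a aS.
have subPA : forall x, x \in S' -> x \in S `\ a.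
  move=> x xS'; rewrite !inE (sub _ xS') andbT; apply/eqP => e.
  by rewrite -e xS' in naS'.
have agree : forall v, v < a -> (v \in S') = (v \in S `\ a).
  move=> v va; apply/idP/idP => [/subPA //|]; rewrite !inE => /andP [_ vS].
  apply/negPn/negP => nv.
  have := amin v; rewrite !inE nv vS => /(_ isT); lia.
have [P1 P2] := @Wins T (fun x => x \in S `\ a) (fun x => x \in S) N a BA BS
  ltac:(by rewrite /= !inE eqxx) ltac:(move=> x /=; rewrite !inE; by case: (x =P a) => [->|]).
rewrite (@tri_char T S _ N HN (fsubsetDl S [fset a])) in bD bmin *.
rewrite (@tri_char T S _ N HN (fsubset_refl S)) in bD bmin *.
rewrite (@tri_char T S _ N HN (introT (@fsubsetP _ S' S) sub)) in bD bmin.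
set WS := Wup T (fun x => x \in S) N in P1 P2 bD bmin *.
set WA := Wup T (fun x => x \in S `\ a) N in P1 P2 bD bmin *.
set WP := Wup T (fun x => x \in S') N in bD bmin *.
set p := fun c => [&& c \in T, c < a & WA c == 0].
have hasp : has p T.
  apply/negPn/negP => /hasPn nh.
  case: (P2 0 a0) => [[E _]|[_ [v [Hv vT Wv]]]].
    by have := @W0 T S N pS pT pr BS; rewrite -/WS E.
  by have := nh v vT; rewrite /p vT Wv eqxx andbT /=; case/andP: Hv => _ ->.
have Cne : [seq x <- (T : seq nat) | p x] != [::] by rewrite -has_filter.
have cF := @max_mem _ Cne.
set c := \max_(t <- _) t in cF.
have cmax : forall v, v \in T -> v < a -> WA v = 0 -> v <= c.
  move=> v vT va Wv; rewrite /c; apply: leq_bigmax_seq => //.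
  by rewrite mem_filter /p vT va Wv eqxx.
move: cF; rewrite mem_filter /p => /andP [/and3P [cT ca /eqP WAc] _].
have WPc : WP c = 0.
  have := @Wup_mono T (fun x => x \in S') (fun x => x \in S `\ a) N c subPA.
  by rewrite -/WP -/WA WAc; lia.
have WSc : WS c = 1.
  case: (P2 c ca) => [[E _]|[_ [v [Hv vT Wv]]]]; first by rewrite E WAc.
  have := cmax v vT ltac:(lia) Wv; lia.
have bc : b <= c.
  apply: bmin; rewrite !inE cT WSc WPc /=.
  by [].
move: bD; rewrite !inE => /andP [nbP /andP [bT WSb]].
rewrite bT /= -leqNgt leqn0 in nbP; move/eqP: nbP => WPb.
have ebc : b = c.
  apply/eqP; rewrite eqn_leq bc /=; rewrite leqNgt; apply/negP => bltc.
  have ba : b < a by lia.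
  case: (P2 b ba) => [[_ A]|[E _]].
    by have := A c ltac:(lia) cT; rewrite WAc.
  have := @Wdelta T (fun x => x \in S') (fun x => x \in S `\ a) N b c BP BA subPA
    ltac:(move=> v hv; apply: agree; lia) ltac:(lia).
  rewrite -/WP -/WA WAc WPc WPb -E; lia.
subst b.
apply/fsetP => t; rewrite !inE.
case: (boolP (t \in T)) => tT; last by rewrite andbF.
rewrite /=.
case: (leqP a t) => ta.
  rewrite P1 //; have -> : (t != c) by apply/eqP; lia.
  by [].
case: (P2 t ta) => [[E A]|[E [v [Hv vT Wv]]]].
  rewrite E /=; case: (t =P c) => [->|ne]; first by rewrite WAc.
  rewrite andbT; case: (posnP (WA t)) => // e.
  have tc := cmax t tT ta e.
  by have := A c ltac:(move/eqP: ne; lia) cT; rewrite WAc.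
rewrite E; case: (t =P c) => [e|ne] //=.
subst t; have := cmax v vT ltac:(lia) Wv; lia.
Qed.
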